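(* Let $A\subset\mathbf{Z}_{\geq0}$ be finite with $0\in A$, $N=\#A\geq2$, $A(x)=\sum_{a\in A}x^a$, and suppose $A(x)$ has a spectrum $\{\theta_1,\dots,\theta_{N-1}\}$; set $\theta_0=0$ and $\epsilon_{ij}=e^{2\pi i(\theta_i-\theta_j)}$. If the number of distinct roots of $A(x)$ on the unit circle is less than $\frac{3N}{2}-1$, then $G=\{\epsilon_{ij}: 0\leq i,j\leq N-1\}$ is a multiplicative group, and it equals the group of all $N$-th roots of unity.
   Context: A set $\{\theta_1,\dots,\theta_{N-1}\}\subset(0,1)$ is called a spectrum for $A(x)$ if the $\theta_j$ are pairwise distinct and, with $\theta_0=0$, $A(e^{2\pi i(\theta_i-\theta_j)})=0$ for all $0\leq i,j\leq N-1$ with $i\neq j$. *)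

(* Defs.v *)
From HB Require Import structures.
From mathcomp Require Import all_boot all_order all_algebra.
From mathcomp Require Import complex.
From mathcomp Require Import reals trigo.
Set Implicit Arguments. Unset Strict Implicit. Unset Printing Implicit Defensive.
Import Order.TTheory GRing.Theory Num.Theory.
Local Open Scope ring_scope.

Definition expi2pi (R : realType) (x : R) : R[i] :=
  Complex (cos (2 * pi * x)) (sin (2 * pi * x)).

(* The polynomial A(x) = sum_{a in A} x^a, for A given as a duplicate-free seq. *)
Definition polyA (R : realType) (A : seq nat) : {poly R[i]} :=
  \sum_(a <- A) 'X^a.

Definition is_spectrum (R : realType) (A : seq nat) (N : nat) (theta : 'I_N -> R) : Prop :=
  (forall i : 'I_N, nat_of_ord i = 0%N -> theta i = 0) /\
  (forall i : 'I_N, nat_of_ord i <> 0%N -> 0 < theta i < 1) /\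
  (forall i j : 'I_N, nat_of_ord i <> 0%N -> nat_of_ord j <> 0%N -> i <> j -> theta i <> theta j) /\
  (forall i j : 'I_N, i <> j -> (polyA R A).[expi2pi (theta i - theta j)] = 0).

Definition is_mul_group (F : fieldType) (G : F -> Prop) : Prop :=
  G 1 /\ (forall x, G x -> x != 0) /\
  (forall x y, G x -> G y -> G (x * y)) /\ (forall x, G x -> G x^-1).

(* Main.v *)
From HB Require Import structures.
From mathcomp Require Import all_boot all_order all_algebra.
From mathcomp Require Import complex.
From mathcomp Require Import reals trigo.
From mathcomp Require Import zify lra.
Require Import Defs.
Set Implicit Arguments. Unset Strict Implicit. Unset Printing Implicit Defensive.
Import Order.TTheory GRing.Theory Num.Theory.
Local Open Scope ring_scope.

Lemma seq_count (T : eqType) (s1 s2 h : seq T) : uniq s1 -> uniq s2 ->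
  {subset s1 <= h} -> {subset s2 <= h} ->
  (size s1 + size s2 <= size h + count (mem s1) s2)%N.
Proof.
move=> u1 u2 s1h s2h.
have : (size (s1 ++ filter (predC (mem s1)) s2) <= size h)%N.
  apply: uniq_leq_size.
  - rewrite cat_uniq u1 filter_uniq // andbT.
    apply/hasPn => x; rewrite mem_filter /= => /andP[H _]; exact H.
  - by move=> x; rewrite mem_cat mem_filter => /orP[/s1h|/andP[_ /s2h]].
rewrite size_cat size_filter -(count_predC (mem s1) s2); lia.
Qed.

Lemma prod_const_seq (R : comNzRingType) (T : Type) (s : seq T) (x : R) :
  \prod_(i <- s) x = x ^+ size s.
Proof. by elim: s => [|a s IH]; rewrite ?big_nil ?big_cons ?expr0 // IH exprS. Qed.

Lemma sum_if (R : comNzRingType) (T : Type) (s : seq T) (P : pred T) (c : R) :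
  \sum_(a <- s) (if P a then c else 0) = c *+ count P s.
Proof.
elim: s => [|a s IH]; rewrite ?big_nil ?big_cons //= IH mulrnDr.
by case: (P a); rewrite ?add0r.
Qed.

Section Comb.
Variables (F : fieldType) (n : nat) (e : 'I_n -> F).
Hypothesis einj : injective e.
Hypothesis enz : forall i, e i != 0.

Definition hs := undup [seq e i / e j | i <- enum 'I_n, j <- enum 'I_n].

Lemma memH z : reflect (exists i j, z = e i / e j) (z \in hs).
Proof.
rewrite mem_undup; apply: (iffP allpairsP) => [[[i j] /= [_ _ ->]]|[i [j ->]]].
  by exists i, j.
by exists (i, j); rewrite !mem_enum.
Qed.

Lemma hs_uniq : uniq hs. Proof. exact: undup_uniq. Qed.

Lemma hs_nz z : z \in hs -> z != 0.
Proof. by move=> /memH[i [j ->]]; rewrite mulf_neq0 ?invr_eq0 ?enz. Qed.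

Lemma hs_inv z : z \in hs -> z^-1 \in hs.
Proof. by move=> /memH[i [j ->]]; apply/memH; exists j, i; rewrite invf_div. Qed.

Lemma hs1 (i : 'I_n) : 1 \in hs.
Proof. by apply/memH; exists i, i; rewrite divff ?enz. Qed.

Hypothesis Hsz : (2 * size hs < 3 * n)%N.

Lemma cnt x y :
  (n < 2 * count (fun b => [exists a, e a / e b == e x / e y]) (enum 'I_n))%N.
Proof.
set S1 := [seq e a / e x | a <- enum 'I_n].
set S2 := [seq e b / e y | b <- enum 'I_n].
have inj z : injective (fun a => e a / e z).
  by move=> a b /(mulIf (invr_neq0 (enz z))) /einj.
have u1 : uniq S1 by rewrite map_inj_uniq ?enum_uniq.
have u2 : uniq S2 by rewrite map_inj_uniq ?enum_uniq.
have sub1 : {subset S1 <= hs} by move=> z /mapP[a _ ->]; apply/memH; exists a, x.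
have sub2 : {subset S2 <= hs} by move=> z /mapP[a _ ->]; apply/memH; exists a, y.
have := seq_count u1 u2 sub1 sub2; rewrite !size_map -enumT size_enum_ord.
have -> : count (mem S1) S2 =
    count (fun b => [exists a, e a / e b == e x / e y]) (enum 'I_n).
  rewrite count_map; apply: eq_count => b /=.
  apply/idP/existsP.
    move=> /mapP[a _ H]; exists a.
    move/eqP: H; rewrite eqr_div ?enz // eqr_div ?enz // => /eqP H.
    by apply/eqP; rewrite -H mulrC.
  move=> [a]; rewrite eqr_div ?enz // => /eqP H.
  apply/mapP; exists a; rewrite ?mem_enum //.
  by apply/eqP; rewrite eqr_div ?enz // H mulrC.
move: Hsz; lia.
Qed.

Lemma hsM u v : u \in hs -> v \in hs -> u * v \in hs.
Proof.
move=> /memH[x [y ->]] /memH[x' [y' ->]].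
have c1 := cnt x y; have c2 := cnt y' x'.
set p := (fun b => _) in c1; set q := (fun b => _) in c2.
have : (0 < count (predI p q) (enum 'I_n))%N.
  have := count_predUI p q (enum 'I_n).
  have := count_size (predU p q) (enum 'I_n).
  rewrite size_enum_ord; lia.
rewrite -has_count => /hasP[z _ /andP[/existsP[a /eqP Ha] /existsP[d /eqP Hd]]].
apply/memH; exists a, d.
rewrite -Ha -[e x' / e y']invf_div -Hd invf_div mulrA divfK ?enz //.
Qed.

Lemma permH g : g \in hs -> perm_eq [seq g * h | h <- hs] hs.
Proof.
move=> gin; apply: uniq_perm; rewrite ?hs_uniq //.
  by rewrite map_inj_uniq ?hs_uniq //; apply: mulfI; apply: hs_nz.
move=> h; apply/mapP/idP => [[k kin ->]|hin]; first exact: hsM.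
exists (g^-1 * h); first by rewrite hsM ?hs_inv.
by rewrite mulrA divff ?mul1r ?hs_nz.
Qed.

Lemma sum_pow a : \sum_(h <- hs) h ^+ a =
  if all (fun h => h ^+ a == 1) hs then (size hs)%:R else 0.
Proof.
case: ifP => [/allP H | /negbT/allPn[g gin Hg]].
  rewrite -sum1_size natr_sum; apply: eq_big_seq => h /H /eqP -> //.
set S := \sum_(h <- hs) h ^+ a.
have HS : S = g ^+ a * S.
  rewrite {1}/S -(perm_big _ (permH gin)) big_map mulr_sumr.
  by apply: eq_bigr => h _; rewrite exprMn.
have : (1 - g ^+ a) * S = 0 by rewrite mulrBl mul1r -HS subrr.
move/eqP; rewrite mulf_eq0 subr_eq0 eq_sym (negbTE Hg) /=.
by move/eqP.
Qed.

Lemma pow_size h : h \in hs -> h ^+ size hs = 1.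
Proof.
move=> hin.
set P := \prod_(x <- hs) x.
have P0 : P != 0.
  rewrite prodf_seq_neq0; apply/allP => x xin /=; exact: hs_nz.
have : h ^+ size hs * P = 1 * P.
  rewrite mul1r {2}/P -(perm_big _ (permH hin)) big_map big_split /=.
  by rewrite prod_const_seq.
by move/(mulIf P0).
Qed.

End Comb.
Unset Implicit Arguments.
Lemma e_add (R : realType) (x y : R) : expi2pi (x + y) = expi2pi x * expi2pi y.
Proof. rewrite /expi2pi; simpc. rewrite mulrDr cosD sinD; f_equal; exact: addrC. Qed.

Lemma e_0 (R : realType) : expi2pi (0 : R) = 1.
Proof. by rewrite /expi2pi mulr0 cos0 sin0. Qed.

Lemma e_nz (R : realType) (x : R) : expi2pi x != 0.
Proof.
apply/negP => /eqP H.
have := e_add _ x (- x); rewrite subrr e_0 H mul0r => /eqP; by rewrite oner_eq0.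
Qed.

Lemma e_sub (R : realType) (x y : R) : expi2pi (x - y) = expi2pi x / expi2pi y.
Proof. apply: (mulIf (e_nz _ y)); rewrite divfK ?e_nz // -e_add; congr expi2pi; lra. Qed.

Lemma e_norm (R : realType) (x : R) : `|expi2pi x| = 1.
Proof. by rewrite normc_def /= cos2Dsin2 sqrtr1. Qed.

Theorem mainTheorem13 (R : realType) (A : seq nat) (N : nat) (theta : 'I_N -> R)
  (s : seq R[i]) :
  uniq A -> 0%N \in A -> N = size A -> (2 <= N)%N ->
  is_spectrum A theta ->
  (* s is the list of the distinct roots of A(x) on the unit circle *)
  uniq s ->
  (forall z : R[i], z \in s <-> (`|z| = 1 /\ root (polyA R A) z)) ->
  (* their number is < 3N/2 - 1 *)
  (size s)%:R < (3 * N)%:R / 2 - 1 :> R ->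
  let G := fun z : R[i] => exists i j : 'I_N, z = expi2pi (theta i - theta j) in
  is_mul_group G /\ (forall z : R[i], G z <-> z ^+ N = 1).
Proof.
move=> uA A0 HN N2 [th0 [_ [_ Hroot]]] us Hs Hsz G.
have N0 : (0 < N)%N by lia.
pose i0 : 'I_N := Ordinal N0.
pose e := fun i : 'I_N => expi2pi (theta i).
have e0 : e i0 = 1 by rewrite /e th0 ?e_0.
have enz : forall i, e i != 0 by move=> i; exact: e_nz.
have pA1 : (polyA R A).[1] = N%:R.
  rewrite /polyA horner_sum HN -sum1_size natr_sum; apply: eq_bigr => a _.
  by rewrite hornerXn expr1n.
have pA1nz : (polyA R A).[1] != 0 by rewrite pA1 pnatr_eq0; lia.
have Hr : forall i j, i != j -> (polyA R A).[e i / e j] = 0.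
  by move=> i j /eqP ij; rewrite /e -e_sub; exact: Hroot.
have einj : injective e.
  move=> i j Hij; apply/eqP; apply: contraT => ij.
  have := Hr i j ij; rewrite Hij divff // => H.
  by move: pA1nz; rewrite H eqxx.
have memHG : forall z, G z <-> z \in hs e.
  move=> z; split => [[i [j ->]]|/memH[i [j ->]]].
    by apply/memH; exists i, j; rewrite e_sub.
  by exists i, j; rewrite e_sub.
have hsub : {subset hs e <= 1 :: s}.
  move=> z /memH[i [j ->]]; rewrite inE.
  case: (eqVneq i j) => [->|ij]; first by rewrite divff ?eqxx.
  apply/orP; right; apply/Hs; split; last by apply/rootP; exact: Hr.
  by rewrite normf_div /e !e_norm divr1.
have Hsz2 : (2 * size (hs e) < 3 * N)%N.
  have h1 := uniq_leq_size (hs_uniq e) hsub.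
  have : ((2 * (size s).+1)%:R : R) < (3 * N)%:R.
    rewrite natrM -addn1 natrD; lra.
  rewrite ltr_nat /= => H2; move: h1 => /= h1; lia.
have Nm : (N <= size (hs e))%N.
  have := @uniq_leq_size _ (map e (enum 'I_N)) (hs e).
  rewrite size_map size_enum_ord; apply.
    by rewrite map_inj_uniq ?enum_uniq.
  by move=> z /mapP[i _ ->]; apply/memH; exists i, i0; rewrite e0 divr1.
have sumP : \sum_(h <- hs e) (polyA R A).[h] = N%:R.
  rewrite (bigD1_seq (1 : R[i])) ?hs_uniq ?(hs1 enz i0) //= pA1 big1_seq ?addr0 //.
  move=> h /andP[h1 /memH[i [j Hh]]]; rewrite Hh Hr //.
  by apply: contraNneq h1 => ij; rewrite Hh ij divff.
have sumQ : \sum_(h <- hs e) (polyA R A).[h] =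
    (size (hs e))%:R *+ count (fun a => all (fun h : R[i] => h ^+ a == 1) (hs e)) A.
  transitivity (\sum_(a <- A) \sum_(h <- hs e) h ^+ a).
    rewrite exchange_big; apply: eq_bigr => h _; rewrite /polyA horner_sum.
    by apply: eq_bigr => a _; rewrite hornerXn.
  rewrite -sum_if; apply: eq_bigr => a _; exact: (sum_pow einj enz Hsz2).
have kpos : (0 < count (fun a => all (fun h : R[i] => h ^+ a == 1%R) (hs e)) A)%N.
  rewrite -has_count; apply/hasP; exists 0%N => //.
  by apply/allP => h _; rewrite expr0.
have Nk : N = (size (hs e) * count (fun a => all (fun h : R[i] => h ^+ a == 1%R) (hs e)) A)%N.
  move: sumP; rewrite sumQ -mulr_natr -natrM => /eqP; rewrite eqr_nat => /eqP.
  by move=> ->.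
have mN : size (hs e) = N by nia.
split.
  split; first by apply/memHG; exact: (hs1 enz i0).
  split; first by move=> x /memHG; exact: (hs_nz enz).
  split; first by move=> x y /memHG hx /memHG hy; apply/memHG; exact: (hsM einj enz Hsz2).
  by move=> x /memHG hx; apply/memHG; exact: hs_inv.
move=> z; rewrite memHG; split => [hin|HzN].
  by rewrite -mN; exact: (pow_size einj enz Hsz2).
apply/negPn/negP => zn.
have := @max_poly_roots _ ('X^N - 1%:P) (z :: hs e).
rewrite -size_poly_eq0 size_XnsubC // /= zn hs_uniq mN ltnn.
have rt : forall w : R[i], w ^+ N = 1 -> root ('X^N - 1%:P) w.
  by move=> w Hw; rewrite rootE !hornerE Hw subrr.
rewrite rt //=.
have -> : all (root ('X^N - 1%:P)) (hs e).
  apply/allP => h hin; apply: rt; rewrite -mN; exact: (pow_size einj enz Hsz2).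
by move=> /(_ isT isT isT).
Qed.
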